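(* Let $\mathcal H$ be a Hilbert space, $(M_n)$ a sequence of bounded operators on $\mathcal H$, and $(L_n)$ subspaces of $\mathcal H$ such that: $(M_n)$ is uniformly bounded; $L_n$ is invariant under $M_n$; and for every sequence $(g_n)$ with $g_n\in L_n$, $\|g_n\|\le1$, the sequence $(M_ng_n)$ is relatively compact in $\mathcal H$. Assume $M_n\to M$ strongly for some bounded operator $M$ on $\mathcal H$, and that there are vectors $g_n\in L_n$ with $\|g_n\|=1$ and scalars $\lambda_n$ with $M_ng_n=\lambda_ng_n$. Then any non-zero cluster point $\lambda_0$ of $(\lambda_n)$ is an eigenvalue of $M$, and there is a subsequence of $(g_n)$ converging to a vector $g$ with $Mg=\lambda_0g$. *)

(* Defs.v *)
From HB Require Import structures.
From mathcomp Require Import all_boot all_order all_algebra.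
From mathcomp Require Import all_classical all_reals all_analysis.
From mathcomp.real_closed Require Import complex.

Set Implicit Arguments.
Unset Strict Implicit.
Unset Printing Implicit Defensive.

Import Order.TTheory GRing.Theory Num.Theory.
Import numFieldTopology.Exports numFieldNormedType.Exports.
Local Open Scope classical_set_scope.
Local Open Scope ring_scope.

(* The field C = R[i] of complex numbers (mathcomp-real-closed) with its
   usual norm topology (the generic one MathComp-Analysis gives every
   numClosedFieldType, made canonical for R[i]). *)
#[warnings="-redundant-canonical-projection"]
HB.instance Definition _ (R : rcfType) :=
  PseudoPointedMetric.copy R[i] (R[i] : numClosedFieldType)^o.

(* A (complex) inner product on V whose induced norm is the given norm of V.
   A complete normed space V over C = R[i] carrying such an inner product is
   a (complex) Hilbert space. *)
Definition is_inner_product (R : rcfType) (V : normedModType R[i])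
    (ip : V -> V -> R[i]) : Prop :=
  [/\ forall x y z, ip (x + y) z = ip x z + ip y z,
      forall (a : R[i]) x y, ip (a *: x) y = a * ip x y,
      forall x y, ip y x = (ip x y)^*%C &
      forall x, ip x x = `|x| ^+ 2].

Definition is_subspace (K : numDomainType) (V : lmodType K) (L : set V) : Prop :=
  [/\ L 0, forall x y, L x -> L y -> L (x + y) &
      forall (a : K) x, L x -> L (a *: x)].

Definition bounded_op (K : numDomainType) (V : normedModType K) (T : {linear V -> V}) :=
  exists C : K, forall x, `|T x| <= C * `|x|.

Definition rel_compact (T : topologicalType) (A : set T) := compact (closure A).

(* Main.v *)
Require Import Defs.
From HB Require Import structures.
From mathcomp Require Import all_boot all_order all_algebra.
From mathcomp Require Import all_classical all_reals all_analysis.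
From mathcomp.real_closed Require Import complex.
Import Order.TTheory GRing.Theory Num.Theory.
Import numFieldTopology.Exports numFieldNormedType.Exports.
Local Open Scope classical_set_scope.
Local Open Scope ring_scope.


Lemma eps_gt0 (R : realType) (k : nat) : 0 < (k.+1%:R : R[i])^-1.
Proof. by rewrite invr_gt0 ltr0n. Qed.

Lemma eps_mono (R : realType) (k K : nat) : (k <= K)%N ->
  (K.+1%:R : R[i])^-1 <= (k.+1%:R)^-1.
Proof.
move=> kK; rewrite lef_pV2 ?posrE ?ltr0n // ler_nat; by [].
Qed.

Arguments eps_mono {R k K}.
Arguments eps_gt0 {R}.
Local Open Scope complex_scope.
Lemma eps_small (R : realType) (e : R[i]) : 0 < e -> exists N : nat, (N.+1%:R : R[i])^-1 < e.
Proof.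
move=> e0.
have er : e \is Num.real by exact: gtr0_real.
rewrite -(RRe_real er) in e0 *.
rewrite (_ : 0 = (0:R)%:C) // ltcR in e0.
have [N HN] : exists N : nat, (N.+1%:R : R)^-1 < complex.Re e.
  exists (Num.truncn (complex.Re e)^-1); rewrite -[X in _ < X]invrK ltf_pV2 ?posrE ?ltr0n ?invr_gt0 //.
  by rewrite real_truncnS_gt ?num_real.
exists N; rewrite -(rmorph_nat (real_complex R)) -fmorphV ltcR //.
Qed.
Local Close Scope complex_scope.
Arguments eps_small {R e}.

Lemma cvgC (R : realType) (u : nat -> R[i]) (l : R[i]) :
  u @ \oo --> l <-> (forall e, 0 < e -> \forall n \near \oo, `|l - u n| < e).
Proof. exact: (@cvgrPdist_lt _ (R[i] : numClosedFieldType)^o _ _ _ u l). Qed.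


Theorem mainTheorem3 (R : realType) (H : completeNormedModType R[i])
  (ip : H -> H -> R[i]) (hip : is_inner_product ip)
  (Mn : nat -> {linear H -> H}) (L : nat -> set H) (M : {linear H -> H})
  (g : nat -> H) (lam : nat -> R[i]) (lam0 : R[i]) :
  (forall n, bounded_op (Mn n)) ->
  (exists C : R[i], forall n x, `|Mn n x| <= C * `|x|) ->
  (forall n, is_subspace (L n)) ->
  (forall n x, L n x -> L n (Mn n x)) ->
  (forall h : nat -> H, (forall n, L n (h n) /\ `|h n| <= 1) ->
     rel_compact (range (fun n => Mn n (h n)))) ->
  bounded_op M ->
  (forall x, (fun n => Mn n x) @ \oo --> M x) ->
  (forall n, L n (g n) /\ `|g n| = 1) ->
  (forall n, Mn n (g n) = lam n *: g n) ->
  cluster (lam @ \oo) lam0 -> lam0 != 0 ->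
  (exists2 v : H, v != 0 & M v = lam0 *: v) /\
  (exists phi : nat -> nat, exists v : H,
     [/\ {homo phi : m n / (m < n)%N >-> (m < n)%N},
         (g \o phi) @ \oo --> v & M v = lam0 *: v]).
Proof.
move=> _ [C HC] _ _ Hcpt0 _ HM Hg Heig Hcl lam0N0.
pose a n := Mn n (g n).
have Hcpt := Hcpt0; rewrite /rel_compact in Hcpt.
pose eps (k : nat) : R[i] := (k.+1%:R)^-1.
pose D k := [set n | (k <= n)%N /\ `|lam0 - lam n| < eps k].
have D0 k : D k !=set0.
  have := Hcl (lam @` [set n | (k <= n)%N]) (ball lam0 (eps k)).
  case.
  - by exists k => // n /= kn; exists n.
  - exact: nbhsx_ballx (eps_gt0 _).
  move=> z [[n /= kn <-]]; move=> Hn; have Hn2 : `|lam0 - lam n| < eps k by exact: Hn.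
  by exists n.
have DD i j : D (maxn i j) `<=` D i `&` D j.
  move=> n [mn Hn]; split; split.
  - exact: leq_trans (leq_maxl _ _) mn.
  - exact: lt_le_trans Hn (eps_mono (leq_maxl _ _)).
  - exact: leq_trans (leq_maxr _ _) mn.
  - exact: lt_le_trans Hn (eps_mono (leq_maxr _ _)).
pose G := filter_from setT D.
have GF : Filter G.
  apply: filter_from_filter; first by exists 0%N.
  by move=> i j _ _; exists (maxn i j).
have GP : ProperFilter G by apply: filter_from_proper => i _; exact: D0.
have Hg1 n : L n (g n) /\ `|g n| <= 1 by case: (Hg n) => ? ->.
have aG : (a @ G) (closure (range a)).
  by exists 0%N => // n _; apply: subset_closure; exists n.
have [w [_ Hw]] := Hcpt g Hg1 (a @ G) (fmap_proper_filter a GP) aG.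
have step k m : exists n, [/\ (m < n)%N, (k <= n)%N, `|lam0 - lam n| < eps k
    & `|w - a n| < eps k].
  pose K := maxn k m.+1.
  have := Hw (a @` D K) (ball w (eps K)).
  case.
  - by exists K => // n Dn; exists n.
  - exact: nbhsx_ballx (eps_gt0 _).
  move=> z [[n [Kn Hn] <-]]; rewrite -ball_normE /= => Hwn.
  exists n; split.
  - exact: leq_trans (leq_maxr _ _) Kn.
  - exact: leq_trans (leq_maxl _ _) Kn.
  - exact: lt_le_trans Hn (eps_mono (leq_maxl _ _)).
  - exact: lt_le_trans Hwn (eps_mono (leq_maxl _ _)).
have [f Hf] := @choice (nat * nat)%type nat (fun km n =>
   [/\ (km.2 < n)%N, (km.1 <= n)%N, `|lam0 - lam n| < eps km.1
    & `|w - a n| < eps km.1]) (fun km => step km.1 km.2).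
pose phi := fix F k := match k with 0 => f (0%N, 0%N) | S k' => f (k, F k') end.
have Hphi k : [/\ (k <= phi k)%N, `|lam0 - lam (phi k)| < eps k
    & `|w - a (phi k)| < eps k].
  case: k => [|k].
    by case: (Hf (0%N, 0%N)) => /= _ ? ? ?; split.
  by case: (Hf (k.+1, phi k)) => /= _ ? ? ?; split.
have phiS k : (phi k < phi k.+1)%N by case: (Hf (k.+1, phi k)).
have phi_inc : {homo phi : m n / (m < n)%N >-> (m < n)%N}.
  by apply: homo_ltn => //; exact: ltn_trans.
have lamc : (lam \o phi) @ \oo --> lam0.
  apply/cvgC => e e0; have [N HN] := eps_small e0.
  exists N => // k /= Nk; case: (Hphi k) => _ Hl _.
  exact: lt_trans (lt_le_trans Hl (eps_mono Nk)) HN.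
have ac : (a \o phi) @ \oo --> w.
  apply/cvgrPdist_lt => e e0; have [N HN] := eps_small e0.
  exists N => // k /= Nk; case: (Hphi k) => _ _ Hl.
  exact: lt_trans (lt_le_trans Hl (eps_mono Nk)) HN.
have lnz : \forall k \near \oo, lam (phi k) != 0.
  move/cvgC: lamc => /(_ `|lam0|); rewrite normr_gt0 => /(_ lam0N0).
  apply: filterS => k /=; apply: contraTneq => ->; by rewrite subr0 ltxx.
pose v := lam0^-1 *: w.
have gc : (g \o phi) @ \oo --> v.
  have hz : \forall k \near \oo, ((lam (phi k))^-1 *: a (phi k)) = (g \o phi) k.
    apply: filterS lnz => k nz.
    by rewrite /= /a Heig scalerA mulVf // scale1r.
  apply: cvg_trans (near_eq_cvg hz) _; exact: cvgZ (cvgV lam0N0 lamc) ac.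
have vN0 : v != 0.
  apply/negP => /eqP v0.
  move/cvgrPdist_lt: gc => /(_ 1 ltr01) [N _ HN].
  have := HN N (leqnn N); by rewrite /= v0 sub0r normrN (proj2 (Hg _)) ltxx.
have Mv : (fun k => Mn (phi k) v) @ \oo --> M v.
  move/cvgrPdist_lt: (HM v) => HMv; apply/cvgrPdist_lt => e e0.
  have [N _ HN] := HMv e e0; exists N => // k /= Nk; apply: HN.
  by apply: leq_trans Nk _; case: (Hphi k).
have C0 : 0 <= C.
  have := HC 0%N (g 0%N); rewrite (proj2 (Hg 0%N)) mulr1.
  exact: le_trans (normr_ge0 _).
pose C' := C + 1.
have C'0 : 0 < C' by rewrite /C' ltr_wpDl.
have Mv2 : (fun k => Mn (phi k) v) @ \oo --> lam0 *: v.
  have -> : lam0 *: v = w by rewrite /v scalerA mulfV // scale1r.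
  move/cvgrPdist_lt: ac => ac'; move/cvgrPdist_lt: gc => gc'.
  apply/cvgrPdist_lt => e e0.
  have e2 : 0 < e / 2 by rewrite divr_gt0.
  have e2C : 0 < e / 2 / C' by rewrite divr_gt0.
  near=> k.
  have h1 : `|w - a (phi k)| < e / 2 by near: k; exact: ac' _ e2.
  have h2 : `|v - g (phi k)| < e / 2 / C' by near: k; exact: gc' _ e2C.
  rewrite (_ : w - _ = (w - a (phi k)) + Mn (phi k) (g (phi k) - v)); last first.
    by rewrite linearB /= addrA subrK.
  rewrite (splitr e); apply: le_lt_trans (ler_normD _ _) _; apply: ltrD h1 _.
  apply: le_lt_trans (HC _ _) _.
  apply: (@le_lt_trans _ _ (C' * `|v - g (phi k)|)).
    by rewrite distrC ler_wpM2r // /C' lerDl.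
  by rewrite -[X in _ < X](divfK (lt0r_neq0 C'0)) mulrC ltr_pM2r.
have Mveq : M v = lam0 *: v by exact: (cvg_unique _ Mv Mv2).
split; first by exists v.
by exists phi, v; split.
Unshelve. all: by end_near.
Qed.
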